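(* Let $\ell_1,\ell_2\in\mathbb{N}$ and let $D$ be a digraph with $\delta^+(D)\ge\ell_1+\ell_2$. Then for every $v\in V(D)$ there are directed paths $P_1,P_2$ in $D$ of lengths $\ell_1$ and $\ell_2$ respectively, both starting at $v$, with $V(P_1)\cap V(P_2)=\{v\}$.
   Context: Digraphs are finite, loopless, without parallel arcs (digons allowed). $\delta^+(D)$ is the minimum out-degree; the length of a path is its number of arcs. *)

(* Defs.v *)
From mathcomp Require Import all_boot.
Set Implicit Arguments.
Unset Strict Implicit.
Unset Printing Implicit Defensive.

(* A digraph: finite vertex type V with arc relation E; looplessness is
   the hypothesis irreflexive E.  A relation has no parallel arcs; digons
   (E u v and E v u) are allowed. *)

Definition outdeg (V : finType) (E : rel V) (v : V) : nat := #|[set w | E v w]|.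

Definition min_outdeg_ge (V : finType) (E : rel V) (k : nat) : Prop :=
  forall v : V, k <= outdeg E v.

(* A directed path starting at v with vertex sequence v :: p: consecutive
   vertices joined by arcs, all vertices distinct.  Its length (number of
   arcs) is size p. *)
Definition dipath (V : finType) (E : rel V) (v : V) (p : seq V) : bool :=
  path E v p && uniq (v :: p).

Definition pverts (V : finType) (v : V) (p : seq V) : {set V} := [set x in v :: p].

(* Main.v *)
Require Import Defs.
From mathcomp Require Import all_boot.

Lemma ext (V : finType) (E : rel V) (k : nat) :
  irreflexive E -> min_outdeg_ge E k ->
  forall n (v : V) (S : {set V}), v \notin S -> n + #|S| <= k ->
  exists p, [/\ dipath E v p, size p = n & all (fun x => x \notin S) p].
Proof.
move=> irr hk; elim=> [|n IH] v S vS hn.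
  by exists [::]; rewrite /dipath /=.
have : #|S| < #|[set w | E v w]|.
  by apply: leq_trans (hk v); rewrite addSn in hn; apply: leq_trans hn; rewrite ltnS leq_addl.
move=> lt.
have [w]: exists w, w \in [set w | E v w] :\: S.
  apply/set0Pn; apply: contraTneq lt => h.
  rewrite -leqNgt; apply: subset_leq_card; by rewrite -setD_eq0 h.
rewrite in_setD inE => /andP[wS Evw].
have vw : v != w by apply: contraTneq Evw => <-; rewrite irr.
have wvS : w \notin v |: S by rewrite in_setU1 eq_sym (negbTE vw) wS.
have [|p [/andP[pp up] sp ap]] := IH w (v |: S) wvS.
  by rewrite cardsU1 vS add1n addnS.
exists (w :: p); split => //=; last first.
  by rewrite wS; apply: sub_all ap => x; rewrite in_setU1 negb_or => /andP[].
- by rewrite sp.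
move: up => /= /andP[wp up].
rewrite /dipath /= Evw pp wp up !andbT in_cons negb_or vw /=.
apply/negP => vp; move/allP: ap => /(_ v vp); by rewrite setU11.
Qed.

Arguments ext {V E k}.

Theorem lemma3p1 (l1 l2 : nat) (V : finType) (E : rel V) :
  irreflexive E ->
  min_outdeg_ge E (l1 + l2) ->
  forall v : V, exists p1 p2 : seq V,
    [/\ dipath E v p1, size p1 = l1,
        dipath E v p2, size p2 = l2 &
        pverts v p1 :&: pverts v p2 = [set v]].
Proof.
move=> irr hk v.
have h2 : l2 + #|@set0 V| <= l1 + l2 by rewrite cards0 addn0 leq_addl.
have [p2 [d2 s2 _]] := ext irr hk l2 v set0 (negbT (in_set0 v)) h2.
have vS : v \notin [set x in p2].
  by rewrite inE; move: d2 => /andP[_] /= /andP[].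
have h1 : l1 + #|[set x in p2]| <= l1 + l2.
  by rewrite leq_add2l -s2 (leq_trans (subset_leq_card (subxx _))) // cardsE card_size.
have [p1 [d1 s1 a1]] := ext irr hk l1 v _ vS h1.
exists p1, p2; split => //.
apply/setP => x; rewrite !inE.
case: eqP => //= _; apply/negP => /andP[x1 x2].
by move/allP: a1 => /(_ x x1); rewrite inE x2.
Qed.
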